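(* Let $O$ be the partial P-matroid USO of a P-matroid extension $\widehat{\mathcal M}$ on $E_{2n}\cup\{q\}$. Then there exists a set $F$ of pairwise vertex-disjoint faces of $Q_n$ such that the set of unoriented half-edges of $O$ (pairs $(v,i)$ with $O(v)_i=0$) is exactly the union over $f\in F$ of the half-edges of $f$ (pairs $(v,i)$ with $v\in f$ and $i$ spanned by $f$). Furthermore, each $f\in F$ is a hypervertex of $O$.
   Context: Oriented matroids are given by circuits $X\in\{-,0,+\}^E$ with support $\underline X$; bases are inclusion-maximal subsets containing no circuit support; for a basis $B$ and $e\notin B$ the fundamental circuit $C(B,e)$ is the unique circuit $X$ with $X_e=+$, $\underline X\subseteq B\cup\{e\}$. $S=\{s_1,\dots,s_n\}$, $T=\{t_1,\dots,t_n\}$, $E_{2n}=S\cup T$, $q\notin E_{2n}$; complementary sets contain no pair $\{s_i,t_i\}$; a circuit is sign-reversing if $X_{s_i}=-X_{t_i}$ whenever $\{s_i,t_i\}\subseteq\underline X$; a P-matroid is an oriented matroid on $E_{2n}$ in which $S$ is a basis and no circuit is sign-reversing; a P-matroid extension is an oriented matroid on $E_{2n}\cup\{q\}$ whose circuits with $X_q=0$ restrict to exactly the circuits of a P-matroid. In a P-matroid extension every complementary $n$-set is a basis. A face of $Q_n$ is a set $\{w\in\{0,1\}^n: w_j=u_j\ \forall j\notin I\}$, spanning the dimensions in $I$. For $v\in\{0,1\}^n$, $B(v)=\{s_i:v_i=0\}\cup\{t_i:v_i=1\}$. The partial P-matroid USO is $O:\{0,1\}^n\to\{-,0,+\}^n$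 with, for $C=C(B(v),q)$ and $e=s_i$ if $v_i=0$, $e=t_i$ if $v_i=1$: $O(v)_i=+$ if $C_e=-$, $-$ if $C_e=+$, $0$ if $C_e=0$. A face $f$ is a hypervertex of $O$ if $O(v)_i=O(w)_i$ for all $v,w\in f$ and all dimensions $i$ not spanned by $f$. *)

(* Defs.v *)
From mathcomp Require Import all_boot.
Set Implicit Arguments. Unset Strict Implicit. Unset Printing Implicit Defensive.

(* Signs {-,0,+} encoded as option bool: None = 0, Some true = +, Some false = - *)
Definition sign := option bool.
Definition sPos : sign := Some true.
Definition sNeg : sign := Some false.
Definition sZero : sign := None.
Definition oppS (s : sign) : sign := omap negb s.

Section OM.
Variable E : finType.
Definition signvec := {ffun E -> sign}.
Definition oppv (X : signvec) : signvec := [ffun e => oppS (X e)].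
Definition supp (X : signvec) : {set E} := [set e | X e != sZero].

(* Circuit axioms of an oriented matroid (C0)-(C3), with weak elimination. *)
Definition om_circuits (C : {set signvec}) : Prop :=
  [/\ (forall X, X \in C -> supp X != set0),
      (forall X, X \in C -> oppv X \in C),
      (forall X Y, X \in C -> Y \in C -> supp X \subset supp Y ->
          X = Y \/ X = oppv Y) &
      (forall X Y e, X \in C -> Y \in C -> X != oppv Y ->
          X e = sPos -> Y e = sNeg ->
          exists2 Z, Z \in C &
            Z e = sZero /\
            forall f, (Z f = sPos -> X f = sPos \/ Y f = sPos) /\
                      (Z f = sNeg -> X f = sNeg \/ Y f = sNeg))].

Definition independent (C : {set signvec}) (B : {set E}) : Prop :=
  forall X, X \in C -> ~~ (supp X \subset B).

Definition is_basis (C : {set signvec}) (B : {set E}) : Prop :=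
  independent C B /\
  forall B' : {set E}, B \subset B' -> independent C B' -> B' = B.

(* fundamental circuit C(B,e): the (unique, when B is a basis and e \notin B)
   circuit X with X_e = + and supp X \subset B \cup {e} *)
Definition fund_circuit (C : {set signvec}) (B : {set E}) (e : E)
  : option signvec :=
  [pick X in C | (X e == sPos) && (supp X \subset e |: B)].
End OM.

(* Ground set E_{2n} : (i,false) = s_i, (i,true) = t_i ;
   extended ground set E_{2n} \cup {q} : Some x for x in E_{2n}, None = q *)
Definition E2n (n : nat) := ('I_n * bool)%type.
Definition E2nq (n : nat) := option (E2n n).

Definition Sset (n : nat) : {set E2n n} := [set x | ~~ x.2].

Definition sign_reversing n (X : signvec (E2n n)) : Prop :=
  forall i : 'I_n, X (i, false) != sZero -> X (i, true) != sZero ->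
    X (i, false) = oppS (X (i, true)).

Definition P_matroid n (C : {set signvec (E2n n)}) : Prop :=
  [/\ om_circuits C, is_basis C (Sset n) &
      forall X, X \in C -> ~ sign_reversing X].

Definition restr n (X : signvec (E2nq n)) : signvec (E2n n) :=
  [ffun x => X (Some x)].

Definition P_matroid_ext n (C : {set signvec (E2nq n)}) : Prop :=
  om_circuits C /\
  P_matroid [set restr X | X in C & X None == sZero].

Definition vertex n := {ffun 'I_n -> bool}.

Definition Bv n (v : vertex n) : {set E2nq n} :=
  [set Some (i, v i) | i : 'I_n].

(* partial P-matroid USO ; the default case of [pick] never occurs for a
   P-matroid extension since every complementary n-set is a basis *)
Definition pusO n (C : {set signvec (E2nq n)}) (v : vertex n) (i : 'I_n)
  : sign :=
  match fund_circuit C (Bv v) None with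
  | Some X => oppS (X (Some (i, v i)))
  | None => sZero
  end.

Definition faceset n (u : vertex n) (I : {set 'I_n}) : {set vertex n} :=
  [set w : vertex n | [forall j, (j \notin I) ==> (w j == u j)]].

Definition is_face n (f : {set vertex n}) : Prop :=
  exists u I, f = faceset u I.

Definition dims n (f : {set vertex n}) : {set 'I_n} :=
  [set i | [exists v in f, exists w in f, v i != w i]].

Definition half_edges n (f : {set vertex n}) : {set vertex n * 'I_n} :=
  [set p | (p.1 \in f) && (p.2 \in dims f)].

Definition unoriented n (O : vertex n -> 'I_n -> sign) : {set vertex n * 'I_n} :=
  [set p | O p.1 p.2 == sZero].

Definition hypervertex n (O : vertex n -> 'I_n -> sign) (f : {set vertex n})
  : Prop :=
  forall v w i, v \in f -> w \in f -> i \notin dims f -> O v i = O w i.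

(* Main.v *)
Require Import Defs.
From mathcomp Require Import all_boot.
From Stdlib Require Import Classical_Prop.
Set Implicit Arguments. Unset Strict Implicit. Unset Printing Implicit Defensive.

Lemma supp_oppv (E : finType) (X : signvec E) : supp (oppv X) = supp X.
Proof. by apply/setP => x; rewrite !inE ffunE; case: (X x). Qed.

Lemma oppvK (E : finType) (X : signvec E) : oppv (oppv X) = X.
Proof. by apply/ffunP => x; rewrite !ffunE; case: (X x) => // -[]. Qed.

Lemma in_supp (E : finType) (X : signvec E) x : (x \in supp X) = (X x != sZero).
Proof. by rewrite inE. Qed.

Lemma normalize (E : finType) (C : {set signvec E}) X a (s : bool) :
  om_circuits C -> X \in C -> X a != sZero ->
  exists2 X', X' \in C & X' a = Some s /\ supp X' = supp X.
Proof.
move=> [_ Hopp _ _] XC.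
case Ha: (X a) => [c|] // _.
case: (eqVneq c s) => [<-|ncs]; first by exists X.
exists (oppv X); first exact: Hopp.
split; last exact: supp_oppv.
by rewrite ffunE Ha /=; case: c s ncs Ha => -[].
Qed.

Lemma mem_Bv n (v : vertex n) i b : (Some (i, b) \in Bv v) = (b == v i).
Proof.
apply/imsetP/eqP => [[j _ [-> ->]] // | ->]; by exists i.
Qed.

Lemma None_Bv n (v : vertex n) : (None \in Bv v) = false.
Proof. by apply/imsetP => -[]. Qed.

Lemma indep_Bv n (C : {set signvec (E2nq n)}) (v : vertex n) X :
  P_matroid_ext C -> X \in C -> ~~ (supp X \subset Bv v).
Proof.
move=> [_ [_ _ HP]] XC; apply/negP => sub.
have XN : X None == sZero.
  apply/negPn/negP => nz.
  by have := subsetP sub None; rewrite in_supp None_Bv => /(_ nz).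
apply: (HP (restr X)); first by apply/imsetP; exists X => //; rewrite inE XC XN.
move=> i; rewrite !ffunE => h1 h2.
have := subsetP sub (Some (i, false)); rewrite in_supp mem_Bv => /(_ h1) /eqP e1.
have := subsetP sub (Some (i, true)); rewrite in_supp mem_Bv => /(_ h2) /eqP e2.
by rewrite -e1 in e2.
Qed.

Definition spans (E : finType) (C : {set signvec E}) (B : {set E}) (e : E) :=
  exists2 X, X \in C & supp X \subset e |: B /\ X e != sZero.

Lemma exchange (E : finType) (C : {set signvec E}) (B B' : {set E}) a b e Y X :
  om_circuits C -> (forall Z, Z \in C -> ~~ (supp Z \subset B')) ->
  (forall x, x \in B -> x != a -> x \in B') -> b \in B' ->
  Y \in C -> supp Y \subset b |: B -> Y a != sZero -> Y e = sZero ->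
  X \in C -> supp X \subset e |: B -> X e != sZero ->
  spans C B' e.
Proof.
move=> HC indep hB hb YC sY Ya Ye XC sX Xe.
case: (eqVneq (X a) sZero) => Xa.
  exists X => //; split => //; apply/subsetP => x; rewrite in_supp => xs.
  have := subsetP sX x; rewrite in_supp => /(_ xs); rewrite !inE => /orP[->//|xB].
  rewrite hB ?orbT //; apply/eqP => xa; by rewrite xa Xa eqxx in xs.
have [X' X'C [X'a sX']] := normalize true HC XC Xa.
have [Y' Y'C [Y'a sY']] := normalize false HC YC Ya.
have Y'e : Y' e = sZero.
  apply/eqP/negPn/negP; rewrite -in_supp sY' in_supp Ye; by rewrite eqxx.
have X'e : X' e != sZero by rewrite -in_supp sX' in_supp.
have neq : X' != oppv Y'.
  apply/eqP => h; move: X'e; by rewrite h ffunE Y'e.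
case: HC => _ _ _ Helim.
have [Z ZC [Za HZ]] := Helim X' Y' a X'C Y'C neq X'a Y'a.
have key : forall f, Z f != sZero -> X' f != sZero \/ Y' f != sZero.
  move=> f; case Zf: (Z f) => [c|] // _.
  have [h1 h2] := HZ f.
  case: c Zf => Zf.
    by case: (h1 Zf) => ->; [left|right].
  by case: (h2 Zf) => ->; [left|right].
have sZ : supp Z \subset e |: B'.
  apply/subsetP => x; rewrite in_supp => Zx.
  have xa : x != a by apply/eqP => xa; rewrite xa Za eqxx in Zx.
  case: (key x Zx) => [hx|hy].
    rewrite -in_supp sX' in hx.
    have := subsetP sX x hx; rewrite !inE => /orP[->//|xB].
    by rewrite hB ?orbT.
  rewrite -in_supp sY' in hy.
  have := subsetP sY x hy; rewrite !inE => /orP[/eqP->|xB].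
    by rewrite hb orbT.
  by rewrite hB ?orbT.
exists Z => //; split => //.
apply/negP => /eqP Ze; apply: (negP (indep Z ZC)).
apply/subsetP => x xs; have := subsetP sZ x xs; rewrite !inE => /orP[/eqP xe|//].
by move: xs; rewrite xe in_supp Ze eqxx.
Qed.

Definition flip n (v : vertex n) i : vertex n :=
  [ffun j => if j == i then ~~ v i else v j].
Definition v0 n : vertex n := [ffun _ => false].
Definition Good n (C : {set signvec (E2nq n)}) (v : vertex n) :=
  forall i, spans C (Bv v) (Some (i, ~~ v i)).

Lemma spans_of n (C : {set signvec (E2nq n)}) v e X :
  P_matroid_ext C -> X \in C -> supp X \subset e |: Bv v -> spans C (Bv v) e.
Proof.
move=> HP XC sX; exists X => //; split => //.
apply/negP => /eqP Xe; apply: (negP (indep_Bv v HP XC)).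
apply/subsetP => x xs; have := subsetP sX x xs; rewrite !inE => /orP[/eqP xe|//].
by move: xs; rewrite xe in_supp Xe eqxx.
Qed.

Lemma step n (C : {set signvec (E2nq n)}) (v w : vertex n) (i : 'I_n) :
  P_matroid_ext C -> w i = ~~ v i -> (forall j, j != i -> w j = v j) -> Good C v ->
  Good C w /\ (forall e, e \notin Bv v -> e != Some (i, w i) ->
                 spans C (Bv v) e -> spans C (Bv w) e).
Proof.
move=> HP wi wj Gv.
have [Y YC [sY Yb]] := Gv i.
have HC : om_circuits C by case: HP.
have hB : forall x, x \in Bv v -> x != Some (i, v i) -> x \in Bv w.
  move=> x /imsetP [j _ ->]; case: (eqVneq j i) => [-> |ji _]; first by rewrite eqxx.
  by rewrite mem_Bv wj.
have hb : Some (i, ~~ v i) \in Bv w by rewrite mem_Bv wi.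
have Ya : Y (Some (i, v i)) != sZero.
  apply/negP => /eqP Ya; apply: (negP (indep_Bv w HP YC)).
  apply/subsetP => x xs; have := subsetP sY x xs; rewrite !inE => /orP[/eqP->//|xB].
  apply: hB => //; apply/eqP => xa; by move: xs; rewrite xa in_supp Ya eqxx.
have part2 : forall e, e \notin Bv v -> e != Some (i, w i) ->
                 spans C (Bv v) e -> spans C (Bv w) e.
  move=> e eB eb [X XC [sX Xe]].
  apply: (exchange HC (fun Z ZC => indep_Bv w HP ZC) hB hb YC sY Ya _ XC sX Xe).
  apply/eqP/negPn/negP; rewrite -in_supp => es.
  have := subsetP sY e es; rewrite !inE wi in eb *; by rewrite (negbTE eb) (negbTE eB).
split => // j.
case: (eqVneq j i) => [-> | ji].
  rewrite wi negbK; apply: (spans_of HP YC).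
  apply/subsetP => x xs; have := subsetP sY x xs; rewrite !inE => /orP[/eqP->|xB].
    by rewrite hb orbT.
  case: (eqVneq x (Some (i, v i))) => [->|xa]; first by [].
  by rewrite hB ?orbT.
rewrite wj //; apply: part2.
- by rewrite mem_Bv; case: (v j).
- by apply/eqP => -[/eqP]; rewrite (negbTE ji).
- exact: Gv.
Qed.

Lemma base n (C : {set signvec (E2nq n)}) : P_matroid_ext C -> Good C (v0 n).
Proof.
move=> HP i; have HP' := HP; case: HP' => _ [_ [_ maxS] _].
set CM := [set restr X | X in C & X None == sZero].
set B' := (i, true) |: Sset n.
case: (boolP [exists X in CM, supp X \subset B']) => [/existsP [X' /andP [XM sX']] | nex].
  case/imsetP: XM => X; rewrite inE => /andP [XC XN] eX.
  apply: (spans_of HP XC); apply/subsetP; case => [y|] ys; last first.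
    by move: ys; rewrite in_supp (eqP XN) eqxx.
  have : y \in supp X' by rewrite eX in_supp ffunE -in_supp.
  move/(subsetP sX'); rewrite !inE => /orP [/eqP -> | ].
    by rewrite ffunE eqxx.
  case: y ys => j b _ /= nb; rewrite mem_Bv ffunE.
  by case: b nb => // _; rewrite ffunE orbT.
exfalso.
have ind : independent CM B'.
  move=> X XM; apply/negP => sX; move/existsP: nex; apply; exists X; by rewrite XM.
have := maxS B' (subsetUr _ _) ind => /setP /(_ (i, true)).
by rewrite !inE eqxx.
Qed.

Lemma flipK n (v : vertex n) i : flip (flip v i) i = v.
Proof.
apply/ffunP => j; rewrite !ffunE eqxx.
case: (eqVneq j i) => [->|//]; by rewrite negbK.
Qed.

Lemma flip_i n (v : vertex n) i : flip v i i = ~~ v i.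
Proof. by rewrite ffunE eqxx. Qed.

Lemma flip_j n (v : vertex n) i j : j != i -> flip v i j = v j.
Proof. by rewrite ffunE => /negbTE ->. Qed.

Lemma reach n (P : vertex n -> Prop) :
  P (v0 n) -> (forall v i, P v -> P (flip v i)) -> forall v, P v.
Proof.
move=> P0 Ps.
suff : forall k (v : vertex n), #|[set j | v j]| = k -> P v by move=> h v; exact: h.
elim => [|k IH] v hv.
  have -> : v = v0 n; last by [].
  apply/ffunP => j; rewrite ffunE; apply/negP => vj.
  have : j \in [set j | v j] by rewrite inE.
  by move/cards0_eq: hv => ->; rewrite inE.
have [j] : exists j, j \in [set j | v j].
  apply/set0Pn; rewrite -cards_eq0 hv //.
rewrite inE => vj.
rewrite -(flipK v j); apply: Ps; apply: IH.
move: hv; rewrite (cardsD1 j) inE vj add1n => -[<-].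
apply: eq_card => x; rewrite !inE ffunE.
case: (eqVneq x j) => [->|//]; by rewrite vj.
Qed.

Lemma good_all n (C : {set signvec (E2nq n)}) : P_matroid_ext C -> forall v, Good C v.
Proof.
move=> HP; apply: reach; first exact: base.
move=> v i Gv; have [] := step HP (flip_i v i) (fun j => @flip_j n v i j) Gv => //.
Qed.

Lemma spans_q n (C : {set signvec (E2nq n)}) : P_matroid_ext C ->
  forall v, spans C (Bv v) None <-> spans C (Bv (v0 n)) None.
Proof.
move=> HP; apply: reach; first by [].
move=> v i IH.
suff : spans C (Bv v) None <-> spans C (Bv (flip v i)) None by tauto.
have G := good_all HP.
have nb : forall w : vertex n, (None : E2nq n) \notin Bv w by move=> w; rewrite None_Bv.
split.
- have [_] := step HP (flip_i v i) (fun j => @flip_j n v i j) (G _).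
  move=> H h; apply: H => //; exact: nb.
- have [_] := step HP (flip_i (flip v i) i) (fun j => @flip_j n _ i j) (G _).
  rewrite flipK => H h; apply: H => //; exact: nb.
Qed.

Lemma uniq_fund n (C : {set signvec (E2nq n)}) (v : vertex n) X Y :
  P_matroid_ext C -> X \in C -> Y \in C -> X None = sPos -> Y None = sPos ->
  supp X \subset None |: Bv v -> supp Y \subset None |: Bv v -> X = Y.
Proof.
move=> HP XC YC Xq Yq sX sY; apply/eqP/negPn/negP => neq.
have HC : om_circuits C by case: HP.
have HC' := HC; case: HC' => _ Hopp _ Helim.
have neq' : X != oppv (oppv Y) by rewrite oppvK.
have Yq' : oppv Y None = sNeg by rewrite ffunE Yq.
have [Z ZC [Zq HZ]] := Helim X (oppv Y) None XC (Hopp _ YC) neq' Xq Yq'.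
apply: (negP (indep_Bv v HP ZC)); apply/subsetP => x; rewrite in_supp => Zx.
have xq : x != None by apply/eqP => e; rewrite e Zq eqxx in Zx.
have : X x != sZero \/ oppv Y x != sZero.
  move: Zx; case Zf: (Z x) => [c|] // _.
  have [h1 h2] := HZ x.
  case: c Zf => Zf.
    by case: (h1 Zf) => ->; [left|right].
  by case: (h2 Zf) => ->; [left|right].
case=> [hx | hy].
  have := subsetP sX x; rewrite in_supp => /(_ hx); rewrite !inE (negbTE xq) //.
rewrite -in_supp supp_oppv in hy.
have := subsetP sY x hy; rewrite !inE (negbTE xq) //.
Qed.

Lemma fund_spec n (C : {set signvec (E2nq n)}) (v : vertex n) X :
  fund_circuit C (Bv v) None = Some X ->
  [/\ X \in C, X None = sPos & supp X \subset None |: Bv v].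
Proof.
rewrite /fund_circuit; case: pickP => // Y /andP [YC /andP [/eqP Yq sY]] [<-].
by split.
Qed.

Lemma fund_exists n (C : {set signvec (E2nq n)}) (v : vertex n) :
  P_matroid_ext C -> spans C (Bv v) None -> exists X, fund_circuit C (Bv v) None = Some X.
Proof.
move=> HP [X XC [sX Xq]].
have HC : om_circuits C by case: HP.
have [X' X'C [X'q sX']] := normalize true HC XC Xq.
rewrite /fund_circuit; case: pickP => [Y _|h]; first by exists Y.
by move: (h X'); rewrite X'C X'q sX' sX eqxx.
Qed.

Lemma fund_spans n (C : {set signvec (E2nq n)}) (v : vertex n) X :
  fund_circuit C (Bv v) None = Some X -> spans C (Bv v) None.
Proof. by case/fund_spec => XC Xq sX; exists X => //; split => //; rewrite Xq. Qed.

Lemma mem_faceset n (u w : vertex n) I :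
  (w \in faceset u I) = [forall j, (j \notin I) ==> (w j == u j)].
Proof. by rewrite inE. Qed.

Lemma faceset_self n (u : vertex n) I : u \in faceset u I.
Proof. by rewrite mem_faceset; apply/forallP => j; apply/implyP. Qed.

Lemma faceset_out n (u w : vertex n) I j :
  w \in faceset u I -> j \notin I -> w j = u j.
Proof. by rewrite mem_faceset => /forallP /(_ j) /implyP h /h /eqP. Qed.

Lemma faceset_move n (u w : vertex n) I :
  w \in faceset u I -> faceset w I = faceset u I.
Proof.
move=> wf; apply/setP => x; rewrite !mem_faceset.
apply/forallP/forallP => h j; apply/implyP => jI;
  have := implyP (h j) jI => /eqP ->; by rewrite (faceset_out wf jI).
Qed.

Lemma dims_faceset n (u : vertex n) I : dims (faceset u I) = I.
Proof.
apply/setP => i; rewrite inE.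
case: (boolP (i \in I)) => iI.
  apply/existsP; exists u; rewrite faceset_self /=.
  apply/existsP; exists (flip u i); rewrite flip_i.
  rewrite mem_faceset; apply/andP; split; last by case: (u i).
  apply/forallP => j; apply/implyP => jI.
  rewrite flip_j //; apply/eqP => e; by rewrite e iI in jI.
apply/negbTE/negP; case/existsP => v /andP [vf]; case/existsP => w /andP [wf].
by rewrite (faceset_out vf iI) (faceset_out wf iI) eqxx.
Qed.

Definition Iof n (C : {set signvec (E2nq n)}) (v : vertex n) : {set 'I_n} :=
  [set i | pusO C v i == sZero].

Lemma keyK n (C : {set signvec (E2nq n)}) (v w : vertex n) :
  P_matroid_ext C -> w \in faceset v (Iof C v) -> forall i, pusO C w i = pusO C v i.
Proof.
move=> HP wf i.
case: (classic (spans C (Bv (v0 n)) None)) => sp.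
- have [Xv ev] := fund_exists HP (proj2 (spans_q HP v) sp).
  have [Xw ew] := fund_exists HP (proj2 (spans_q HP w) sp).
  have [XvC Xvq sXv] := fund_spec ev.
  have [XwC Xwq sXw] := fund_spec ew.
  have eq : Xw = Xv.
    apply: (uniq_fund HP XwC XvC Xwq Xvq sXw).
    apply/subsetP => x xs; have := subsetP sXv x xs.
    rewrite !inE => /orP [->//|/imsetP [j _ ej]].
    have jI : j \notin Iof C v.
      rewrite inE /pusO ev -ej; move: xs; rewrite in_supp.
      by case: (Xv x).
    by rewrite ej mem_Bv (faceset_out wf jI) eqxx orbT.
  rewrite /pusO ev ew eq.
  case: (eqVneq (w i) (v i)) => [->//|wv].
  have iI : i \in Iof C v by apply: contraR wv => /(faceset_out wf) ->.
  move: iI; rewrite inE /pusO ev => /eqP ->.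
  apply/eqP; apply/negPn/negP => h.
  have : Some (i, w i) \in supp Xv by rewrite in_supp; move: h; case: (Xv _).
  move/(subsetP sXv); rewrite !inE mem_Bv (negbTE wv).
  by [].
- have z : forall u j, pusO C u j = sZero.
    move=> u j; rewrite /pusO; case e: (fund_circuit C (Bv u) None) => [X|//].
    by exfalso; apply: sp; apply/(spans_q HP u); exact: fund_spans e.
  by rewrite !z.
Qed.

Theorem mainTheorem4 (n : nat) (C : {set signvec (E2nq n)}) :
  P_matroid_ext C ->
  exists F : {set {set vertex n}},
    [/\ (forall f, f \in F -> is_face f),
        (forall f g, f \in F -> g \in F -> f != g -> [disjoint f & g]),
        unoriented (pusO C) = \bigcup_(f in F) half_edges f &
        (forall f, f \in F -> hypervertex (pusO C) f)].
Proof.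
move=> HP.
pose fo (v : vertex n) := faceset v (Iof C v).
have Iw : forall v w, w \in fo v -> Iof C w = Iof C v.
  move=> v w wf; apply/setP => i; by rewrite !inE (keyK HP wf).
have fw : forall v w, w \in fo v -> fo w = fo v.
  move=> v w wf; rewrite /fo (Iw _ _ wf); exact: faceset_move.
exists [set fo v | v : vertex n]; split.
- by move=> f /imsetP [v _ ->]; exists v, (Iof C v).
- move=> f g /imsetP [v _ ->] /imsetP [u _ ->] neq.
  rewrite -setI_eq0; apply/eqP/setP => x; rewrite in_setI in_set0.
  apply/negbTE/negP => /andP [xv xu].
  by move: neq; rewrite -(fw _ _ xv) -(fw _ _ xu) eqxx.
- apply/setP => -[v i]; rewrite inE /=.
  apply/idP/bigcupP.
    move=> h; exists (fo v); first by apply/imsetP; exists v.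
    rewrite inE /= dims_faceset faceset_self inE h //.
  move=> [f /imsetP [u _ ->]]; rewrite inE /= dims_faceset => /andP [vf iI].
  by move: iI; rewrite -(Iw _ _ vf) inE.
- move=> f /imsetP [u _ ->] v w i vf wf _.
  by rewrite (keyK HP vf) (keyK HP wf).
Qed.
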